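(* Let $\mathfrak f=f_0x^2+f_1x+f_2\in\mathbb R[x,y]$ with $f_i\in\mathbb R[y]$ and $\deg(f_i)\le i$. Then there exists an algorithm which computes $\mathcal V_{\mathrm{aff}}(\mathfrak f)$.
   Context: For a set $\mathcal I$ of polynomials in $\mathbb R[x_1,\dots,x_d]$, $\mathcal V(\mathcal I)$ is its common real zero set, and $\mathcal V_{\mathrm{aff}}(\mathcal I)$ (the isolated affine subspaces) is the set of all affine subspaces $\mathcal C\subset\mathcal V(\mathcal I)$ which are not properly contained in a connected component of $\mathcal V(\mathcal I)$, i.e., the connected components of $\mathcal V(\mathcal I)$ that are affine subspaces. Algorithms operate exactly on real numbers with real root finding of univariate polynomials as a primitive. *)

(* Defs.v *)
From HB Require Import structures.
From mathcomp Require Import all_boot all_order all_algebra.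
From mathcomp Require Import all_classical all_reals all_analysis.
Set Implicit Arguments.
Unset Strict Implicit.
Unset Printing Implicit Defensive.
Import Order.TTheory GRing.Theory Num.Theory.
Local Open Scope classical_set_scope.
Local Open Scope ring_scope.
Import numFieldNormedType.Exports.

(* Geometry in the plane R^2 (modelled as R * R with the product topology,  *)
(* i.e. the Euclidean topology).                                            *)

Definition feval (R : realType) (f0 f1 f2 : {poly R}) (z : R * R) : R :=
  f0.[z.2] * z.1 ^+ 2 + f1.[z.2] * z.1 + f2.[z.2].

Definition zeroset (R : realType) (f0 f1 f2 : {poly R}) : set (R * R) :=
  [set z | feval f0 f1 f2 z = 0].

Definition affine_subspace (R : realType) (C : set (R * R)) : Prop :=
  C !=set0 /\
  forall a b : R * R, C a -> C b -> forall t : R,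
    C ((1 - t) * a.1 + t * b.1, (1 - t) * a.2 + t * b.2).

Definition Vaff (R : realType) (V : set (R * R)) : set (set (R * R)) :=
  [set C | affine_subspace C /\ C `<=` V /\
           ~ (exists x, V x /\ C `<` @connected_component (R * R)%type V x)].

(* A model of algorithms computing exactly with real numbers (BSS-style      *)
(* register machine over R) with real root finding of univariate            *)
(* polynomials as a primitive, and an output instruction emitting a         *)
(* description (point + spanning vectors) of an affine subspace of R^2.     *)

Inductive instr (R : Type) : Type :=
  | IConst of nat & R
  | IAdd of nat & nat & nat
  | ISub of nat & nat & nat
  | IMul of nat & nat & nat
  | IDiv of nat & nat & nat        (* reg d := reg a / reg b  (x/0 = 0)    *)
  | IJmp of nat
  | IJlt of nat & nat
  | IJeq of nat & nat
  | IRoots of nat & nat & nat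
      (* IRoots d s n : let p = \sum_(i <= n) reg (s+i) X^i.
         If p = 0 then reg d := -1, otherwise reg d := k, the number of
         distinct real roots of p, and reg (d+1), ..., reg (d+k) := these
         roots in increasing order. *)
  | IEmit of nat & nat.

Definition program (R : Type) := seq (instr R).

(* An emitted description: base point and list of direction vectors. *)
Definition descr (R : Type) := ((R * R) * seq (R * R))%type.

Record mstate (R : Type) := MState {
  ms_pc : nat;
  ms_reg : nat -> R;
  ms_out : seq (descr R) }.

Definition upd (R : Type) (reg : nat -> R) (d : nat) (v : R) : nat -> R :=
  fun i => if i == d then v else reg i.

Definition poly_of_regs (R : realType) (reg : nat -> R) (s n : nat) : {poly R} :=
  \poly_(i < n.+1) reg (s + i)%N.

Definition roots_result (R : realType) (reg reg' : nat -> R) (d s n : nat) : Prop :=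
  let p := poly_of_regs reg s n in
  if p == 0 then reg' = upd reg d (-1)
  else exists rs : seq R,
      sorted <%R rs /\ (forall x, x \in rs = root p x) /\
      reg' = (fun i => if i == d then (size rs)%:R
                       else if (d < i <= d + size rs)%N
                            then nth 0 rs (i - d.+1)%N
                            else reg i).

Definition emit_descr (R : realType) (reg : nat -> R) (k r : nat) : descr R :=
  ((reg r, reg r.+1),
   [seq (reg (r + 2 + 2 * i)%N, reg (r + 3 + 2 * i)%N) | i <- iota 0 k]).

Inductive step (R : realType) (P : program R) : mstate R -> mstate R -> Prop :=
  | StConst pc reg out d c :
      nth (IJmp R pc) P pc = IConst d c -> (pc < size P)%N ->
      step P (MState pc reg out) (MState pc.+1 (upd reg d c) out)
  | StAdd pc reg out d a b :
      nth (IJmp R pc) P pc = IAdd R d a b -> (pc < size P)%N ->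
      step P (MState pc reg out) (MState pc.+1 (upd reg d (reg a + reg b)) out)
  | StSub pc reg out d a b :
      nth (IJmp R pc) P pc = ISub R d a b -> (pc < size P)%N ->
      step P (MState pc reg out) (MState pc.+1 (upd reg d (reg a - reg b)) out)
  | StMul pc reg out d a b :
      nth (IJmp R pc) P pc = IMul R d a b -> (pc < size P)%N ->
      step P (MState pc reg out) (MState pc.+1 (upd reg d (reg a * reg b)) out)
  | StDiv pc reg out d a b :
      nth (IJmp R pc) P pc = IDiv R d a b -> (pc < size P)%N ->
      step P (MState pc reg out) (MState pc.+1 (upd reg d (reg a / reg b)) out)
  | StJmp pc reg out l :
      nth (IJmp R pc) P pc = IJmp R l -> (pc < size P)%N ->
      step P (MState pc reg out) (MState l reg out)
  | StJlt pc reg out a l :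
      nth (IJmp R pc) P pc = IJlt R a l -> (pc < size P)%N ->
      step P (MState pc reg out) (MState (if reg a < 0 then l else pc.+1) reg out)
  | StJeq pc reg out a l :
      nth (IJmp R pc) P pc = IJeq R a l -> (pc < size P)%N ->
      step P (MState pc reg out) (MState (if reg a == 0 then l else pc.+1) reg out)
  | StRoots pc reg reg' out d s n :
      nth (IJmp R pc) P pc = IRoots R d s n -> (pc < size P)%N ->
      roots_result reg reg' d s n ->
      step P (MState pc reg out) (MState pc.+1 reg' out)
  | StEmit pc reg out k r :
      nth (IJmp R pc) P pc = IEmit R k r -> (pc < size P)%N ->
      step P (MState pc reg out) (MState pc.+1 reg (rcons out (emit_descr reg k r))).

Inductive reach (R : realType) (P : program R) : mstate R -> mstate R -> Prop :=
  | reach_refl s : reach P s s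
  | reach_step s1 s2 s3 : step P s1 s2 -> reach P s2 s3 -> reach P s1 s3.

Definition init_state (R : realType) (f0 f1 f2 : {poly R}) : mstate R :=
  MState 0 (fun i => nth 0 [:: f0`_0; f1`_0; f1`_1; f2`_0; f2`_1; f2`_2] i) [::].

Definition halted (R : realType) (P : program R) (s : mstate R) : Prop :=
  (size P <= ms_pc s)%N.

Definition descr_set (R : realType) (e : descr R) : set (R * R) :=
  [set z | exists t : seq R, size t = size e.2 /\
     z = (e.1.1 + \sum_(i < size e.2) t`_i * (e.2`_i).1,
          e.1.2 + \sum_(i < size e.2) t`_i * (e.2`_i).2)].

Definition output_family (R : realType) (out : seq (descr R)) : set (set (R * R)) :=
  [set C | exists2 e, e \in out & C = descr_set e].

Definition computes_Vaff (R : realType) (P : program R) : Prop :=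
  forall f0 f1 f2 : {poly R},
    (size f0 <= 1)%N -> (size f1 <= 2)%N -> (size f2 <= 3)%N ->
    (exists s, reach P (init_state f0 f1 f2) s /\ halted P s) /\
    (forall s, reach P (init_state f0 f1 f2) s -> halted P s ->
       output_family (ms_out s) = Vaff (zeroset f0 f1 f2)).

(* Main.v *)
Set Warnings "-notation-overridden,-ambiguous-paths,-notation-incompatible-prefix,-deprecated".
Require Import Defs.
From HB Require Import structures.
From mathcomp Require Import all_boot all_order all_algebra.
From mathcomp Require Import all_classical all_reals all_analysis.
From mathcomp Require Import polyrcf.
From mathcomp Require Import ring lra zify.
Set Implicit Arguments. Unset Strict Implicit. Unset Printing Implicit Defensive.
Import Order.TTheory GRing.Theory Num.Theory.
Local Open Scope classical_set_scope.
Local Open Scope ring_scope.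
Import numFieldNormedType.Exports.

Section A.
Variable R : realType.
Implicit Types (C D V : set (R * R)).

Definition segf (p q : R * R) (t : R) : R * R :=
  ((1 - t) * p.1 + t * q.1, (1 - t) * p.2 + t * q.2).

Lemma cont_lin (k l : R) : continuous (fun t : R => k + t * l).
Proof.
move=> t; apply: cvgD; first exact: cvg_cst.
by apply: cvgM; [exact: cvg_id | exact: cvg_cst].
Qed.

Lemma cont_pair (T : topologicalType) (f g : T -> R) t :
  {for t, continuous f} -> {for t, continuous g} ->
  {for t, continuous (fun x => (f x, g x))}.
Proof.
move=> hf hg.
exact: (@cvg_pair _ _ _ (nbhs t) (nbhs (f t)) (nbhs (g t)) _ _ _ f g hf hg).
Qed.

Lemma segf_cont p q : continuous (segf p q).
Proof.
move=> t; apply: (@cont_pair R (fun t => (1 - t) * p.1 + t * q.1)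
  (fun t => (1 - t) * p.2 + t * q.2)).
  have -> : (fun t => (1 - t) * p.1 + t * q.1) = (fun t => p.1 + t * (q.1 - p.1)).
    by apply: funext => s; ring.
  exact: cont_lin.
have -> : (fun t => (1 - t) * p.2 + t * q.2) = (fun t => p.2 + t * (q.2 - p.2)).
  by apply: funext => s; ring.
exact: cont_lin.
Qed.

Lemma conn_img (T : topologicalType) (h : R -> T) (S : set R) :
  is_interval S -> (forall y, S y -> {for y, continuous h}) -> connected (h @` S).
Proof.
move=> iS hc; apply: connected_continuous_connected; first by apply/connected_intervalP.
rewrite continuous_subspace_in => y; rewrite inE => Sy.
by apply: continuous_subspaceT_for => //; apply: hc.
Qed.

Lemma is_intervalT : is_interval (@setT R).
Proof. by []. Qed.

Lemma aff_conn C : affine_subspace C -> connected C.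
Proof.
move=> [[c Cc] Caff].
have -> : C = \bigcup_(q in C) (segf c q @` setT).
  apply/seteqP; split => z.
    move=> Cz; exists z => //; exists 1 => //.
    by rewrite /segf; case: z {Cz} => x y /=; congr pair; ring.
  by move=> [q Cq [t _ <-]]; apply: Caff.
apply: bigcup_connected.
  exists c => q Cq; exists 0 => //; rewrite /segf; case: c {Cc} => x y /=.
  by congr pair; ring.
move=> q Cq; apply: conn_img; first exact: is_intervalT.
by move=> y _; apply: segf_cont.
Qed.

Lemma Vaff_sub V C D : Vaff V C -> connected D -> D `<=` V ->
  (exists z, D z /\ C z) -> D `<=` C.
Proof.
move=> [Caff [CV Cn]] cD DV [z [Dz Cz]].
apply: contrapT => nDC; apply: Cn; exists z; split; first exact: CV.
split.
  by apply: connected_component_max => //; apply: aff_conn.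
move=> compC; apply: nDC => w Dw; apply: compC.
by apply: (connected_component_max Dz DV cD).
Qed.

Lemma Vaff_intro V C : affine_subspace C -> C `<=` V ->
  (forall D, connected D -> D `<=` V -> (exists z, D z /\ C z) -> D `<=` C) ->
  Vaff V C.
Proof.
move=> Caff CV H; split => //; split => //.
move=> [x [Vx [sub nsub]]]; apply: nsub.
apply: H.
- exact: component_connected.
- exact: connected_component_sub.
- by case: Caff => [[c Cc] _]; exists c; split => //; apply: sub.
Qed.

Lemma Vaff_conn V : connected V ->
  Vaff V = [set C | C = V /\ affine_subspace V].
Proof.
move=> cV; apply/seteqP; split => C.
  move=> [Caff [CV Cn]] ; have VC : V `<=` C.
    apply: (Vaff_sub (conj Caff (conj CV Cn))) => //.
    by case: Caff => [[c Cc] _]; exists c; split => //; apply: CV.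
  have E : C = V by apply/seteqP; split.
  by rewrite -E; split.
move=> [-> Va]; apply: Vaff_intro => //.
Qed.

End A.

Section A2.
Variable R : realType.
Implicit Types (C D V : set (R * R)).

Definition gap (S : set R) := forall u u', S u -> S u' -> u < u' ->
  exists w, u < w < u' /\ ~ S w.

Lemma phi_cont (al be : R) : continuous (fun z : R * R => al * z.1 + be * z.2).
Proof.
move=> z; apply: cvgD; apply: cvgM; try exact: cvg_cst.
  exact: cvg_fst.
exact: cvg_snd.
Qed.

Lemma phi_const al be (S : set R) D : gap S -> connected D ->
  (forall z, D z -> S (al * z.1 + be * z.2)) ->
  forall z1 z2, D z1 -> D z2 -> al * z1.1 + be * z1.2 = al * z2.1 + be * z2.2.
Proof.
move=> gS cD DS.
have cE : connected ((fun z : R * R => al * z.1 + be * z.2) @` D).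
  apply: connected_continuous_connected => //.
  exact/continuous_subspaceT/phi_cont.
have iE := iffLR (connected_intervalP _) cE.
have key : forall z1 z2, D z1 -> D z2 ->
    ~ (al * z1.1 + be * z1.2 < al * z2.1 + be * z2.2).
  move=> z1 z2 D1 D2 lt12.
  have [w [/andP[w1 w2] nSw]] := gS _ _ (DS _ D1) (DS _ D2) lt12.
  have : ((fun z : R * R => al * z.1 + be * z.2) @` D) w.
    apply: (iE (al * z1.1 + be * z1.2) (al * z2.1 + be * z2.2)).
    - by exists z1.
    - by exists z2.
    - by rewrite (ltW w1) (ltW w2).
  by move=> [z Dz zw]; apply: nSw; rewrite -zw; apply: DS.
move=> z1 z2 D1 D2.
case: (ltgtP (al * z1.1 + be * z1.2) (al * z2.1 + be * z2.2)) => // h.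
  by exfalso; apply: (key z1 z2).
by exfalso; apply: (key z2 z1).
Qed.

Definition lvl (al be u : R) : set (R * R) := [set z | al * z.1 + be * z.2 = u].

Lemma lvl_aff al be u : (al != 0) || (be != 0) -> affine_subspace (lvl al be u).
Proof.
move=> nz; have n0 : al ^+ 2 + be ^+ 2 != 0.
  by rewrite paddr_eq0 ?sqr_ge0 // !sqrf_eq0 negb_and.
split.
  exists (u * al / (al ^+ 2 + be ^+ 2), u * be / (al ^+ 2 + be ^+ 2)).
  rewrite /lvl /=; field; exact: n0.
move=> a b /= ha hb t; rewrite /lvl /= in ha hb *.
rewrite -[u](_ : (1 - t) * u + t * u = u); last by ring.
rewrite -{1}ha -hb; ring.
Qed.

Lemma Vaff_level al be (S : set R) : (al != 0) || (be != 0) -> gap S ->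
  Vaff [set z | S (al * z.1 + be * z.2)] =
  [set C | exists u, S u /\ C = lvl al be u].
Proof.
move=> nz gS; apply/seteqP; split => C.
  move=> HC; have [Caff [CV Cn]] := HC.
  have [[c Cc] _] := Caff.
  exists (al * c.1 + be * c.2); split; first exact: CV.
  have CL : C `<=` lvl al be (al * c.1 + be * c.2).
    move=> z Cz; rewrite /lvl /=.
    by apply: (phi_const gS (aff_conn Caff)) => // w /CV.
  have LC : lvl al be (al * c.1 + be * c.2) `<=` C.
    apply: (Vaff_sub HC).
    - exact/aff_conn/lvl_aff.
    - by move=> z; rewrite /lvl /= => ->; apply: CV.
    - by exists c.
  by apply/seteqP; split.
move=> [u [Su ->]]; apply: Vaff_intro.
- exact: lvl_aff.
- by move=> z; rewrite /lvl /= => ->.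
- move=> D cD DV [z [Dz Lz]] w Dw; rewrite /lvl /= -Lz.
  by apply: (phi_const gS cD DV).
Qed.

End A2.

Section A3.
Variable R : realType.
Implicit Types (C D V : set (R * R)).

Definition Fq (a b c d e g : R) (z : R * R) : R :=
  a * z.1 ^+ 2 + b * z.1 * z.2 + c * z.2 ^+ 2 + d * z.1 + e * z.2 + g.
Definition Qf (a b c : R) (v : R * R) : R := a * v.1 ^+ 2 + b * v.1 * v.2 + c * v.2 ^+ 2.
Definition dxF (a b d : R) (z : R * R) : R := 2 * a * z.1 + b * z.2 + d.
Definition dyF (b c e : R) (z : R * R) : R := b * z.1 + 2 * c * z.2 + e.

Lemma near_pos (f : R -> R) y0 : {for y0, continuous f} -> 0 < f y0 ->
  exists2 eps : R, 0 < eps & forall y, y0 - eps <= y <= y0 + eps -> 0 < f y.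
Proof.
move=> cf fy0.
have H : \forall t \near y0, 0 < f t.
  exact: (@cvgr_gt R _ (nbhs y0) _ f (f y0) cf 0 fy0).
move: H => /nbhs_ballP [e /= e0 He].
exists (e / 2); first by rewrite divr_gt0.
move=> y /andP [y1 y2]; apply: He; rewrite /ball /=.
rewrite ltr_distlC; apply/andP; split; lra.
Qed.

Lemma graph_arc (h : R -> R) y0 eps (P : set (R * R)) : 0 < eps ->
  (forall y, y0 - eps <= y <= y0 + eps -> {for y, continuous h} /\ P (h y, y)) ->
  exists D, [/\ connected D, D `<=` P, D (h y0, y0) &
              exists z1, D z1 /\ z1 <> (h y0, y0)].
Proof.
move=> e0 H.
exists ((fun y => (h y, y)) @` [set y | y0 - eps <= y <= y0 + eps]); split.
- apply: conn_img.
    move=> u v /= /andP[u1 u2] /andP[v1 v2] w /andP[uw wv].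
    apply/andP; split; lra.
  move=> y /H [hc _].
  exact: (@cont_pair R R h id y hc cvg_id).
- by move=> z [y /H [_ Py] <-].
- by exists y0 => //=; apply/andP; split; lra.
- exists (h (y0 + eps), y0 + eps); split.
    by exists (y0 + eps) => //=; apply/andP; split; lra.
  by move=> [] _ /eqP; rewrite -subr_eq0 addrAC subrr add0r; apply/negP/lt0r_neq0.
Qed.

Lemma cont_quad (k0 k1 k2 : R) : continuous (fun y : R => k0 + k1 * y + k2 * y ^+ 2).
Proof.
have -> : (fun y : R => k0 + k1 * y + k2 * y ^+ 2) =
    horner (k0%:P + k1 *: 'X + k2 *: 'X ^+ 2).
  by apply: funext => y; rewrite !hornerE.
exact: continuous_horner.
Qed.

End A3.

Section A4.
Variable R : realType.
Implicit Types (C D V : set (R * R)).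

Lemma eq_from0 (k L M E : R) : E = 0 -> L - M = k * E -> L = M.
Proof. by move=> ->; rewrite mulr0 => /eqP; rewrite subr_eq0 => /eqP. Qed.

Lemma arc_x (a b c d e g : R) z0 : Fq a b c d e g z0 = 0 -> dxF a b d z0 != 0 ->
  exists D, [/\ connected D, D `<=` [set z | Fq a b c d e g z = 0], D z0 &
              exists z1, D z1 /\ z1 <> z0].
Proof.
case: z0 => x0 y0; rewrite /Fq /dxF /= => F0 s0.
set s := 2 * a * x0 + b * y0 + d in s0.
have [a0|an0] := eqVneq a 0.
  subst a.
  have B0 : 0 < (d + b * y0) ^+ 2.
    have sE : s = d + b * y0 by rewrite /s; ring.
    by rewrite lt0r sqr_ge0 andbT sqrf_eq0 -sE.
  have cB : {for y0, continuous (fun y : R => (d + b * y) ^+ 2)}.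
    have -> : (fun y : R => (d + b * y) ^+ 2) =
       (fun y => d ^+ 2 + (2 * d * b) * y + b ^+ 2 * y ^+ 2).
      by apply: funext => y; ring.
    exact: cont_quad.
  have [eps e0 He] := near_pos cB B0.
  set h := fun y : R => - (g + e * y + c * y ^+ 2) / (d + b * y).
  have hx0 : h y0 = x0.
    have Bn : d + b * y0 != 0 by rewrite -sqrf_eq0 lt0r_neq0.
    rewrite /h; apply: (mulIf Bn); rewrite divfK //.
    by apply: (eq_from0 (k := -1) F0); ring.
  have := @graph_arc R h y0 eps [set z | Fq 0 b c d e g z = 0] e0.
  case.
    move=> y /He hy; have Bn : d + b * y != 0 by rewrite -sqrf_eq0 lt0r_neq0.
    split.
      rewrite /h; apply: continuousM.
        apply: continuousN.
        have -> : (fun y : R => g + e * y + c * y ^+ 2) = (fun y => g + e * y + c * y ^+ 2) by [].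
        exact: cont_quad.
      apply: continuousV => //.
      have -> : (fun y : R => d + b * y) = (fun y => d + b * y + 0 * y ^+ 2).
        by apply: funext => w; ring.
      exact: cont_quad.
    rewrite /Fq /h /=; field; exact: Bn.
  move=> D [cD DV Dh [z1 [Dz1 z1n]]]; exists D; split => //.
    by rewrite -hx0.
  by exists z1; split => //; rewrite -hx0.
set Dq := fun y : R => (d ^+ 2 - 4 * a * g) + (2 * b * d - 4 * a * e) * y
                      + (b ^+ 2 - 4 * a * c) * y ^+ 2.
have cD : continuous Dq by exact: cont_quad.
have Dy0 : Dq y0 = s ^+ 2.
  by apply: (eq_from0 (k := - 4 * a) F0); rewrite /Dq /s; ring.
have D0 : 0 < Dq y0 by rewrite Dy0 lt0r sqr_ge0 andbT sqrf_eq0.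
have [eps e0 He] := near_pos (cD y0) D0.
set sg := Num.sg s.
have sg2 : sg ^+ 2 = 1 by rewrite /sg sqr_sg s0.
set h := fun y : R => (- (d + b * y) + sg * Num.sqrt (Dq y)) / (2 * a).
have a2 : 2 * a != 0 by rewrite mulf_neq0 // pnatr_eq0.
have hx0 : h y0 = x0.
  rewrite /h Dy0 sqrtr_sqr /sg mulr_sg_norm /s; field; exact: an0.
have := @graph_arc R h y0 eps [set z | Fq a b c d e g z = 0] e0.
case.
  move=> y /He hy; split.
    rewrite /h; apply: continuousM; last exact: cvg_cst.
    apply: continuousD.
      apply: continuousN.
      have -> : (fun y : R => d + b * y) = (fun y => d + b * y + 0 * y ^+ 2).
        by apply: funext => w; ring.
      exact: cont_quad.
    apply: continuousM; first exact: cvg_cst.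
    apply: continuous_comp; first exact: cD.
    exact: sqrt_continuous.
  have r2 : Num.sqrt (Dq y) ^+ 2 = Dq y by rewrite sqr_sqrtr // ltW.
  rewrite /Fq /h /=.
  set r := Num.sqrt (Dq y) in r2 *.
  have E : a * ((- (d + b * y) + sg * r) / (2 * a)) ^+ 2 +
      b * ((- (d + b * y) + sg * r) / (2 * a)) * y + c * y ^+ 2 +
      d * ((- (d + b * y) + sg * r) / (2 * a)) + e * y + g =
      (sg ^+ 2 * r ^+ 2 - Dq y) / (4 * a).
    rewrite /Dq; field; exact: an0.
  by rewrite E sg2 mul1r r2 subrr mul0r.
move=> D [cD' DV Dh [z1 [Dz1 z1n]]]; exists D; split => //.
  by rewrite -hx0.
by exists z1; split => //; rewrite -hx0.
Qed.

End A4.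

Section A5.
Variable R : realType.
Implicit Types (C D V : set (R * R)).

Definition sw (z : R * R) : R * R := (z.2, z.1).

Lemma sw_sw z : sw (sw z) = z. Proof. by case: z. Qed.

Lemma sw_cont : continuous sw.
Proof.
move=> z; exact: (@cont_pair R (R * R)%type (fun z : R * R => z.2) (fun z : R * R => z.1) z
   cvg_snd cvg_fst).
Qed.

Lemma arc_any (a b c d e g : R) z0 : Fq a b c d e g z0 = 0 ->
  dxF a b d z0 != 0 \/ dyF b c e z0 != 0 ->
  exists D, [/\ connected D, D `<=` [set z | Fq a b c d e g z = 0], D z0 &
              exists z1, D z1 /\ z1 <> z0].
Proof.
move=> F0 [hx|hy]; first exact: arc_x.
have F0' : Fq c b a e d g (sw z0) = 0 by rewrite -F0 /Fq /sw /=; ring.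
have hy' : dxF c b e (sw z0) != 0 by move: hy; rewrite /dxF /dyF /sw /=;
  rewrite (_ : 2 * c * z0.2 + b * z0.1 + e = b * z0.1 + 2 * c * z0.2 + e) //; ring.
have [D [cD DV Dz [z1 [Dz1 n1]]]] := arc_x F0' hy'.
exists (sw @` D); split.
- apply: connected_continuous_connected => //.
  exact/continuous_subspaceT/sw_cont.
- move=> z [w Dw <-]; have := DV w Dw; rewrite /Fq /sw /= => <-; ring.
- by exists (sw z0) => //; rewrite sw_sw.
- exists (sw z1); split; first by exists z1.
  by move=> E; apply: n1; rewrite -E sw_sw.
Qed.

Lemma Fq_seg a b c d e g (p q : R * R) t :
  Fq a b c d e g (segf p q t) = Fq a b c d e g p +
    t * (dxF a b d p * (q.1 - p.1) + dyF b c e p * (q.2 - p.2)) +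
    t ^+ 2 * Qf a b c (q.1 - p.1, q.2 - p.2).
Proof. by rewrite /Fq /segf /dxF /dyF /Qf /=; ring. Qed.

Lemma Vaff_smooth (a b c d e g : R) :
  (forall z, Fq a b c d e g z = 0 -> dxF a b d z != 0 \/ dyF b c e z != 0) ->
  (forall p v, Fq a b c d e g p = 0 -> dxF a b d p * v.1 + dyF b c e p * v.2 = 0 ->
     Qf a b c v = 0 -> v = (0, 0)) ->
  Vaff [set z | Fq a b c d e g z = 0] = set0.
Proof.
move=> Hns Hnl; apply/seteqP; split => // C HC.
have [[[c0 Cc] Caff] [CV _]] := HC.
have F0 : Fq a b c d e g c0 = 0 := CV c0 Cc.
have [D [cD DV Dz [z1 [Dz1 n1]]]] := arc_any F0 (Hns _ F0).
have DC := Vaff_sub HC cD DV (ex_intro _ c0 (conj Dz Cc)).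
have Cz1 := DC _ Dz1.
have Ft t : Fq a b c d e g (segf c0 z1 t) = 0 by apply: CV; apply: Caff.
have h1 := Ft 1; have hm := Ft (-1).
rewrite !Fq_seg F0 add0r in h1 hm.
have hQ : Qf a b c (z1.1 - c0.1, z1.2 - c0.2) = 0.
  have : 2 * Qf a b c (z1.1 - c0.1, z1.2 - c0.2) = 0.
    rewrite -[RHS](addr0 0) -{1}h1 -{1}hm; ring.
  by move/eqP; rewrite mulf_eq0 pnatr_eq0 /= => /eqP.
have hL : dxF a b d c0 * (z1.1 - c0.1) + dyF b c e c0 * (z1.2 - c0.2) = 0.
  by move: h1; rewrite hQ mulr0 addr0 mul1r.
have := Hnl c0 (z1.1 - c0.1, z1.2 - c0.2) F0 hL hQ.
case=> /eqP; rewrite subr_eq0 => /eqP e1 /eqP; rewrite subr_eq0 => /eqP e2.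
by apply: n1; case: z1 e1 e2 {Dz1 Cz1 hQ hL h1 hm Ft} => u v /= -> ->; case: c0 {Cc F0 Dz}.
Qed.

End A5.

Section A6.
Variable R : realType.
Implicit Types (C D V : set (R * R)).

Definition detc (a b c d e g : R) : R :=
  4 * a * c * g + b * d * e - a * e ^+ 2 - c * d ^+ 2 - b ^+ 2 * g.

Lemma det_ns a b c d e g p : Fq a b c d e g p = 0 -> dxF a b d p = 0 ->
  dyF b c e p = 0 -> detc a b c d e g = 0.
Proof.
move=> F0 X0 Y0.
have E : detc a b c d e g =
   (b * e - 2 * c * d) / 2 * dxF a b d p + (b * d - 2 * a * e) / 2 * dyF b c e p
   + (4 * a * c - b ^+ 2) * (Fq a b c d e g p - p.1 / 2 * dxF a b d p - p.2 / 2 * dyF b c e p).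
  by rewrite /detc /Fq /dxF /dyF; field.
by rewrite E F0 X0 Y0 !mulr0 !subr0 !mulr0 !addr0.
Qed.

Lemma det_nl a b c d e g p v : Fq a b c d e g p = 0 ->
  dxF a b d p * v.1 + dyF b c e p * v.2 = 0 -> Qf a b c v = 0 ->
  detc a b c d e g = 0 \/ v = (0, 0).
Proof.
move=> F0 L0 Q0.
have T : detc a b c d e g = detc a b c (dxF a b d p) (dyF b c e p) (Fq a b c d e g p).
  by rewrite /detc /dxF /dyF /Fq; ring.
rewrite T F0; set d' := dxF a b d p in L0 *; set e' := dyF b c e p in L0 *.
have I1 : detc a b c d' e' 0 * v.1 ^+ 2 =
   (d' * v.1 + e' * v.2) * (c * (e' * v.2 - d' * v.1) + b * e' * v.1) - e' ^+ 2 * Qf a b c v.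
  by rewrite /detc /Qf; ring.
have I2 : detc a b c d' e' 0 * v.2 ^+ 2 =
   (d' * v.1 + e' * v.2) * (a * (d' * v.1 - e' * v.2) + b * d' * v.2) - d' ^+ 2 * Qf a b c v.
  by rewrite /detc /Qf; ring.
have h1 : detc a b c d' e' 0 * v.1 ^+ 2 = 0 by rewrite I1 L0 Q0; ring.
have h2 : detc a b c d' e' 0 * v.2 ^+ 2 = 0 by rewrite I2 L0 Q0; ring.
have [->|dn] := eqVneq (detc a b c d' e' 0) 0; first by left.
right; move/eqP: h1; rewrite mulf_eq0 (negbTE dn) sqrf_eq0 /= => /eqP x0.
move/eqP: h2; rewrite mulf_eq0 (negbTE dn) sqrf_eq0 /= => /eqP y0.
by case: v {L0 Q0 I1 I2} x0 y0 => x y /= -> ->.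
Qed.

Lemma Vaff_nondeg a b c d e g : detc a b c d e g != 0 ->
  Vaff [set z | Fq a b c d e g z = 0] = set0.
Proof.
move=> dn; apply: Vaff_smooth.
  move=> z F0; case: (eqVneq (dxF a b d z) 0) => hx; last by left.
  case: (eqVneq (dyF b c e z) 0) => hy; last by right.
  by move: dn; rewrite (det_ns F0 hx hy) eqxx.
move=> p v F0 L0 Q0; case: (det_nl F0 L0 Q0) => // h.
by move: dn; rewrite h eqxx.
Qed.

End A6.

Section A7.
Variable R : realType.
Implicit Types (C D V : set (R * R)).

Lemma gap_root (p : {poly R}) : p != 0 -> gap (fun u => root p u).
Proof.
move=> pn u u' ru ru' uu'; apply: contrapT => H.
have H' : forall w, u < w < u' -> root p w.
  move=> w hw; apply: contrapT => nr; apply: H; exists w; split => //.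
set f := fun i : nat => u + (u' - u) / (i.+2)%:R.
have fin : forall i, u < f i < u'.
  move=> i; rewrite /f; have d0 : 0 < u' - u by rewrite subr_gt0.
  have n0 : (1 : R) < (i.+2)%:R by rewrite ltr1n.
  have k0 : (0 : R) < (i.+2)%:R by rewrite ltr0n.
  have h1 : 0 < (u' - u) / (i.+2)%:R by rewrite divr_gt0.
  have h2 : (u' - u) / (i.+2)%:R < u' - u.
    by rewrite ltr_pdivrMr // -subr_gt0 -[X in _ - X]mulr1 -mulrBr mulr_gt0 // subr_gt0.
  move: h1 h2; set q := (u' - u) / _ => h1 h2; apply/andP; split; lra.
have Hall : all (root p) (map f (iota 0 (size p))).
  by apply/allP => x /mapP [i _ ->]; apply: H'.
have Huniq : uniq (map f (iota 0 (size p))).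
  rewrite map_inj_uniq ?iota_uniq // => i j; rewrite /f => /addrI.
  have d0 : u' - u != 0 by rewrite subr_eq0 gt_eqF.
  move/(congr1 (fun x => (u' - u)^-1 * x)); rewrite !mulKf //.
  by move/invr_inj/eqP; rewrite eqr_nat => /eqP [].
have := max_poly_roots pn Hall Huniq.
by rewrite size_map size_iota ltnn.
Qed.


End A7.

Section A8.
Variable R : realType.
Implicit Types (C D V : set (R * R)).

Lemma aff_setT : affine_subspace (@setT (R * R)).
Proof. by split => //; exists (0, 0). Qed.

Lemma aff_set1 (z : R * R) : affine_subspace [set z].
Proof.
split; first by exists z.
move=> a b /= -> -> t; case: z => x y /=; congr pair; ring.
Qed.

Lemma Vaff_setT : Vaff (@setT (R * R)) = [set setT].
Proof.
rewrite Vaff_conn; last exact/aff_conn/aff_setT.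
by apply/seteqP; split => C /=; [case | move=> ->; split => //; exact: aff_setT].
Qed.

Lemma Vaff_set0 : @Vaff R set0 = set0.
Proof.
rewrite Vaff_conn; last exact: connected0.
by apply/seteqP; split => C //= [_ [[z]]].
Qed.

Lemma Vaff_set1 (z : R * R) : Vaff [set z] = [set [set z]].
Proof.
rewrite Vaff_conn; last exact: connected1.
by apply/seteqP; split => C /=; [case | move=> ->; split => //; exact: aff_set1].
Qed.

Lemma Vaff_lin (d e g : R) : (d != 0) || (e != 0) ->
  Vaff [set z | Fq 0 0 0 d e g z = 0] = [set lvl d e (- g)].
Proof.
move=> nz.
have -> : [set z | Fq 0 0 0 d e g z = 0] = [set z | (fun u => u = - g) (d * z.1 + e * z.2)].
  apply/seteqP; split => z /=; rewrite /Fq.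
    by move=> H; apply/eqP; rewrite -subr_eq0 opprK -H; apply/eqP; ring.
  by move=> H; rewrite !mul0r !add0r H; ring.
rewrite (@Vaff_level R d e (fun u => u = - g) nz); last first.
  by move=> u u' -> -> ; rewrite ltxx.
by apply/seteqP; split => C /=; [move=> [u [-> ->]] | move=> ->; exists (- g)].
Qed.

Definition zc (a b c d e : R) : R * R :=
  ((b * e - 2 * c * d) / (4 * a * c - b ^+ 2), (b * d - 2 * a * e) / (4 * a * c - b ^+ 2)).

Lemma Fq_center (a b c d e g : R) (u : R * R) : 4 * a * c - b ^+ 2 != 0 ->
  Fq a b c d e g ((zc a b c d e).1 + u.1, (zc a b c d e).2 + u.2) =
  detc a b c d e g / (4 * a * c - b ^+ 2) + Qf a b c u.
Proof. by move=> D0; rewrite /Fq /zc /detc /Qf /=; field. Qed.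

Lemma Vaff_ell (a b c d e g : R) : b ^+ 2 - 4 * a * c < 0 -> detc a b c d e g = 0 ->
  Vaff [set z | Fq a b c d e g z = 0] = [set [set zc a b c d e]].
Proof.
move=> Dl dt0.
have D0 : 4 * a * c - b ^+ 2 != 0 by apply/lt0r_neq0; lra.
have an : a != 0 by apply/eqP => a0; move: Dl; rewrite a0 !(mulr0, mul0r) subr0 ltNge sqr_ge0.
suff -> : [set z | Fq a b c d e g z = 0] = [set zc a b c d e] by exact: Vaff_set1.
apply/seteqP; split => z /=; last first.
  move=> ->; have := @Fq_center a b c d e g (0, 0) D0; rewrite dt0 mul0r add0r /Qf /= !addr0.
  by rewrite expr0n /= !(mulr0, mul0r, addr0).
set u := (z.1 - (zc a b c d e).1, z.2 - (zc a b c d e).2).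
have -> : z = ((zc a b c d e).1 + u.1, (zc a b c d e).2 + u.2).
  by rewrite /u /=; case: z {u} => x y /=; congr pair; ring.
rewrite Fq_center // dt0 mul0r add0r => Q0.
have I : 4 * a * Qf a b c u = (2 * a * u.1 + b * u.2) ^+ 2 + (4 * a * c - b ^+ 2) * u.2 ^+ 2.
  by rewrite /Qf; ring.
rewrite Q0 mulr0 in I.
have h1 : 0 <= (2 * a * u.1 + b * u.2) ^+ 2 by exact: sqr_ge0.
have h2 : 0 <= (4 * a * c - b ^+ 2) * u.2 ^+ 2 by rewrite mulr_ge0 ?sqr_ge0 //; lra.
have e1 : (2 * a * u.1 + b * u.2) ^+ 2 = 0 by lra.
have e2 : (4 * a * c - b ^+ 2) * u.2 ^+ 2 = 0 by lra.
have u2 : u.2 = 0.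
  by move/eqP: e2; rewrite mulf_eq0 (negbTE D0) orFb sqrf_eq0 => /eqP.
have a2 : 2 * a != 0 by rewrite mulf_neq0 // pnatr_eq0.
have e1' : 2 * a * u.1 + b * u.2 = 0 by apply/eqP; rewrite -sqrf_eq0; apply/eqP.
have u1 : u.1 = 0.
  by move: e1'; rewrite u2 mulr0 addr0 => /eqP; rewrite mulf_eq0 (negbTE a2) orFb => /eqP.
by rewrite u1 u2 !addr0; case: (zc a b c d e).
Qed.

End A8.

Section A9.
Variable R : realType.
Implicit Types (C D V : set (R * R)).

Definition crs (v w : R * R) : R := v.1 * w.2 - v.2 * w.1.
Definition Bt (a b c : R) (v w : R * R) : R :=
  2 * a * v.1 * w.1 + b * (v.1 * w.2 + v.2 * w.1) + 2 * c * v.2 * w.2.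

Definition linf (z0 v : R * R) (t : R) : R * R := (z0.1 + t * v.1, z0.2 + t * v.2).

Lemma linf_cont z0 v : continuous (linf z0 v).
Proof.
move=> t; apply: (@cont_pair R R (fun t => z0.1 + t * v.1) (fun t => z0.2 + t * v.2));
  exact: cont_lin.
Qed.

Lemma Vaff_cross (a b c : R) (z0 v w : R * R) (V : set (R * R)) :
  (forall u, V (z0.1 + u.1, z0.2 + u.2) <-> Qf a b c u = 0) ->
  Qf a b c v = 0 -> Qf a b c w = 0 -> crs v w != 0 -> Bt a b c v w != 0 ->
  Vaff V = set0.
Proof.
move=> HV Qv Qw cn Bn.
have VE : V = linf z0 v @` setT `|` linf z0 w @` setT.
  apply/seteqP; split => z.
    move=> Vz.
    set u := (z.1 - z0.1, z.2 - z0.2).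
    have zE : z = (z0.1 + u.1, z0.2 + u.2) by rewrite /u /=; case: z {Vz u} => x y /=; congr pair; ring.
    rewrite zE in Vz; have Qu := iffLR (HV u) Vz.
    have I : Qf a b c u * crs v w ^+ 2 = Qf a b c v * crs u w ^+ 2 +
       Qf a b c w * crs v u ^+ 2 + Bt a b c v w * crs u w * crs v u.
      by rewrite /Qf /crs /Bt; ring.
    rewrite Qu Qv Qw !mul0r !add0r in I.
    have : crs u w * crs v u = 0.
      by move/esym/eqP: I; rewrite -mulrA mulf_eq0 (negbTE Bn) orFb => /eqP.
    move/eqP; rewrite mulf_eq0 => /orP [] /eqP h.
      right; exists (crs v u / crs v w) => //.
      rewrite zE /linf; congr pair; congr (_ + _).
        by apply/esym; apply: (eq_from0 (k := v.1 / crs v w) h); rewrite /crs /=; field; exact: cn.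
      by apply/esym; apply: (eq_from0 (k := v.2 / crs v w) h); rewrite /crs /=; field; exact: cn.
    left; exists (crs u w / crs v w) => //.
    rewrite zE /linf; congr pair; congr (_ + _).
      by apply/esym; apply: (eq_from0 (k := w.1 / crs v w) h); rewrite /crs /=; field; exact: cn.
    by apply/esym; apply: (eq_from0 (k := w.2 / crs v w) h); rewrite /crs /=; field; exact: cn.
  move=> [] [t _ <-].
    apply/(HV (t * v.1, t * v.2)).
    by rewrite -[RHS](mulr0 (t ^+ 2)) -Qv /Qf /=; ring.
  apply/(HV (t * w.1, t * w.2)).
  by rewrite -[RHS](mulr0 (t ^+ 2)) -Qw /Qf /=; ring.
rewrite Vaff_conn; last first.
  rewrite VE; apply: connectedU.
  - exists z0; split; exists 0 => //; rewrite /linf; case: z0 {HV VE} => x y /=;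
      congr pair; ring.
  - by apply: conn_img => // y _; apply: linf_cont.
  - by apply: conn_img => // y _; apply: linf_cont.
apply/seteqP; split => C // [_ [_ Vaff]].
have Vv : V (z0.1 + v.1, z0.2 + v.2) by apply/HV.
have Vw : V (z0.1 + w.1, z0.2 + w.2) by apply/HV.
have := Vaff _ _ Vv Vw (1 / 2).
have -> : ((1 - 1 / 2) * (z0.1 + v.1, z0.2 + v.2).1 + 1 / 2 * (z0.1 + w.1, z0.2 + w.2).1,
      (1 - 1 / 2) * (z0.1 + v.1, z0.2 + v.2).2 + 1 / 2 * (z0.1 + w.1, z0.2 + w.2).2) =
   (z0.1 + ((v.1 + w.1) / 2, (v.2 + w.2) / 2).1, z0.2 + ((v.1 + w.1) / 2, (v.2 + w.2) / 2).2).
  by rewrite /=; congr pair; field.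
move/HV; have -> : Qf a b c ((v.1 + w.1) / 2, (v.2 + w.2) / 2) =
   (Qf a b c v + Qf a b c w + Bt a b c v w) / 4.
  by rewrite /Qf /Bt /=; field.
rewrite Qv Qw !add0r => /eqP; rewrite mulf_eq0 invr_eq0 pnatr_eq0 orbF.
by rewrite (negbTE Bn).
Qed.

End A9.

Section A10.
Variable R : realType.
Implicit Types (C D V : set (R * R)).

Lemma Bt_id (a b c : R) v w :
  Bt a b c v w ^+ 2 = 4 * Qf a b c v * Qf a b c w + (b ^+ 2 - 4 * a * c) * crs v w ^+ 2.
Proof. by rewrite /Bt /Qf /crs; ring. Qed.

Lemma Vaff_hyp (a b c d e g : R) : 0 < b ^+ 2 - 4 * a * c -> detc a b c d e g = 0 ->
  Vaff [set z | Fq a b c d e g z = 0] = set0.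
Proof.
move=> Dp dt0.
have D0 : 4 * a * c - b ^+ 2 != 0 by apply/ltr0_neq0; lra.
have HV : forall u, [set z | Fq a b c d e g z = 0]
   ((zc a b c d e).1 + u.1, (zc a b c d e).2 + u.2) <-> Qf a b c u = 0.
  by move=> u; rewrite /= Fq_center // dt0 mul0r add0r.
suff [v [w [Qv Qw cn]]] : exists v w, [/\ Qf a b c v = 0, Qf a b c w = 0 & crs v w != 0].
  apply: (Vaff_cross HV Qv Qw cn).
  rewrite -sqrf_eq0 Bt_id Qv Qw !mulr0 add0r mulf_eq0 negb_or sqrf_eq0 cn andbT.
  by apply/lt0r_neq0.
have [a0|an] := eqVneq a 0.
  have bn : b != 0.
    by apply/eqP => b0; move: Dp; rewrite a0 b0 !(mulr0, mul0r, expr0n) /= subr0 ltxx.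
  exists (1, 0), (- c, b); split.
  - by rewrite /Qf a0 /=; ring.
  - by rewrite /Qf a0 /=; ring.
  - by rewrite /crs /= mul1r mul0r subr0.
set s := Num.sqrt (b ^+ 2 - 4 * a * c).
have s2 : s ^+ 2 = b ^+ 2 - 4 * a * c by rewrite sqr_sqrtr // ltW.
have s0 : 0 < s by rewrite sqrtr_gt0.
exists (- b + s, 2 * a), (- b - s, 2 * a); split.
- by apply: (eq_from0 (k := a) (_ : s ^+ 2 - (b ^+ 2 - 4 * a * c) = 0));
    [rewrite s2 subrr | rewrite /Qf /=; ring].
- by apply: (eq_from0 (k := a) (_ : s ^+ 2 - (b ^+ 2 - 4 * a * c) = 0));
    [rewrite s2 subrr | rewrite /Qf /=; ring].
- rewrite /crs /= (_ : _ - _ = 4 * a * s); last by ring.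
  by rewrite !mulf_neq0 ?pnatr_eq0 // gt_eqF.
Qed.

Lemma gap_quad (k2 k1 k0 : R) : k2 != 0 ->
  gap (fun u => k2 * u ^+ 2 + k1 * u + k0 = 0).
Proof.
move=> k2n.
set p := k2 *: 'X^2 + k1 *: 'X + k0%:P.
have pn : p != 0.
  apply/eqP => p0; have : p`_2 = k2.
    by rewrite /p !coefD !coefZ !coefXn coefX coefC /= mulr1 !mulr0 !addr0.
  by rewrite p0 coef0 => /esym/eqP; rewrite (negbTE k2n).
have E : forall u, (k2 * u ^+ 2 + k1 * u + k0 = 0) <-> root p u.
  by move=> u; rewrite /root /p !hornerE; split => [->|/eqP].
move=> u u' /E ru /E ru' uu'.
have [w [hw nw]] := gap_root pn ru ru' uu'.
by exists w; split => // /E.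
Qed.

Lemma Vaff_para (a b c d e g : R) : a != 0 -> b ^+ 2 - 4 * a * c = 0 ->
  detc a b c d e g = 0 ->
  Vaff [set z | Fq a b c d e g z = 0] =
  [set C | exists u, a * u ^+ 2 + d * u + g = 0 /\ C = lvl 1 (b / (2 * a)) u].
Proof.
move=> an D0 dt0.
have a2 : 2 * a != 0 by rewrite mulf_neq0 // pnatr_eq0.
have cE : c = b ^+ 2 / (4 * a).
  by apply/esym; apply: (eq_from0 (k := (4 * a)^-1) D0); field; exact: an.
have I : 4 * a * detc a b c d e g =
   - (2 * a * e - b * d) ^+ 2 + (4 * a * c - b ^+ 2) * (4 * a * g - d ^+ 2).
  by rewrite /detc; ring.
have eE : e = b * d / (2 * a).
  have : (2 * a * e - b * d) ^+ 2 = 0.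
    move: I; rewrite dt0 mulr0 (_ : 4 * a * c - b ^+ 2 = - (b ^+ 2 - 4 * a * c)); last by ring.
    by rewrite D0 oppr0 mul0r addr0 => /esym/eqP; rewrite oppr_eq0 => /eqP.
  move/eqP; rewrite sqrf_eq0 subr_eq0 => /eqP H.
  by apply: (mulfI a2); rewrite H; field.
have -> : [set z | Fq a b c d e g z = 0] =
    [set z | (fun u => a * u ^+ 2 + d * u + g = 0) (1 * z.1 + b / (2 * a) * z.2)].
  apply/seteqP; split => z /=;
  (have -> : Fq a b c d e g z = a * (1 * z.1 + b / (2 * a) * z.2) ^+ 2 +
     d * (1 * z.1 + b / (2 * a) * z.2) + g by rewrite /Fq cE eE; field); by [].
rewrite (@Vaff_level R 1 (b / (2 * a)) (fun u => a * u ^+ 2 + d * u + g = 0)) //.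
  by rewrite oner_neq0.
exact: gap_quad.
Qed.

Lemma Vaff_para0 (b c d e g : R) : c != 0 -> b ^+ 2 - 4 * 0 * c = 0 ->
  detc 0 b c d e g = 0 ->
  Vaff [set z | Fq 0 b c d e g z = 0] =
  [set C | exists u, c * u ^+ 2 + e * u + g = 0 /\ C = lvl 0 1 u].
Proof.
move=> cn D0 dt0.
have b0 : b = 0 by move: D0; rewrite !(mulr0, mul0r) subr0 => /eqP; rewrite sqrf_eq0 => /eqP.
have d0 : d = 0.
  have : c * d ^+ 2 = 0 by apply: (eq_from0 (k := -1) dt0); rewrite /detc b0; ring.
  by move/eqP; rewrite mulf_eq0 (negbTE cn) sqrf_eq0 /= => /eqP.
have -> : [set z | Fq 0 b c d e g z = 0] =
    [set z | (fun u => c * u ^+ 2 + e * u + g = 0) (0 * z.1 + 1 * z.2)].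
  apply/seteqP; split => z /=;
  (have -> : Fq 0 b c d e g z = c * (0 * z.1 + 1 * z.2) ^+ 2 +
     e * (0 * z.1 + 1 * z.2) + g by rewrite /Fq b0 d0; ring); by [].
rewrite (@Vaff_level R 0 1 (fun u => c * u ^+ 2 + e * u + g = 0)) //.
  by rewrite oner_neq0 orbT.
exact: gap_quad.
Qed.

End A10.

Section M1.
Variable R : realType.

Lemma roots_uniq (reg r1 r2 : nat -> R) d s n :
  roots_result reg r1 d s n -> roots_result reg r2 d s n -> r1 = r2.
Proof.
rewrite /roots_result; case: ifP => _; first by move=> -> ->.
move=> [rs1 [s1 [m1 ->]]] [rs2 [s2 [m2 ->]]].
have -> : rs1 = rs2.
  by apply: (irr_sorted_eq lt_trans ltxx s1 s2) => x; rewrite m1 m2.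
by [].
Qed.

Ltac fin_det Hi := match goal with H : nth _ _ _ = _ |- _ =>
  rewrite Hi in H; first [discriminate | (injection H; intros; subst; reflexivity)] end.

Lemma step_det (P : program R) s s1 s2 : step P s s1 -> step P s s2 -> s1 = s2.
Proof.
move=> h1 h2; case: h1 h2.
- by move=> pc reg out d c Hi Hl h2; inversion h2; fin_det Hi.
- by move=> pc reg out d a b Hi Hl h2; inversion h2; fin_det Hi.
- by move=> pc reg out d a b Hi Hl h2; inversion h2; fin_det Hi.
- by move=> pc reg out d a b Hi Hl h2; inversion h2; fin_det Hi.
- by move=> pc reg out d a b Hi Hl h2; inversion h2; fin_det Hi.
- by move=> pc reg out l Hi Hl h2; inversion h2; fin_det Hi.
- by move=> pc reg out a l Hi Hl h2; inversion h2; fin_det Hi.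
- by move=> pc reg out a l Hi Hl h2; inversion h2; fin_det Hi.
- move=> pc reg reg' out d sr n Hi Hl Hr h2; inversion h2; try fin_det Hi.
  rewrite Hi in H2; case: H2 => ? ? ?; subst.
  by rewrite (roots_uniq Hr H5).
- by move=> pc reg out k r Hi Hl h2; inversion h2; fin_det Hi.
Qed.

Lemma step_nhalt (P : program R) s s' : step P s s' -> ~ halted P s.
Proof. by case=> *; rewrite /halted /= leqNgt; apply/negP/negPn. Qed.

Lemma reach_uniq (P : program R) s t1 t2 : reach P s t1 -> halted P t1 ->
  reach P s t2 -> halted P t2 -> t1 = t2.
Proof.
move=> r1; elim: r1 t2 => [s0|s0 s1 s3 st r IH] t2 h1 r2 h2.
  inversion r2; subst => //.
  by case: (step_nhalt H h1).
inversion r2; subst.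
  by case: (step_nhalt st h2).
by apply: IH => //; rewrite (step_det st H).
Qed.

End M1.

Section M2.
Variable R : realType.

Definition Prog : program R := [::
 (*0*) IConst 10 4; IMul R 11 0 5; IMul R 12 11 3; IMul R 13 10 12; IMul R 14 2 1;
 (*5*) IMul R 15 14 4; IAdd R 16 13 15; IMul R 17 4 4; IMul R 18 0 17; ISub R 19 16 18;
 (*10*) IMul R 20 1 1; IMul R 21 5 20; ISub R 22 19 21; IMul R 23 2 2; IMul R 24 23 3;
 (*15*) ISub R 25 22 24; IJeq R 25 18; IJmp R 121; IMul R 26 0 0; IAdd R 27 26 23;
 (*20*) IMul R 28 5 5; IAdd R 29 27 28; IJeq R 29 24; IJmp R 47; IAdd R 30 20 17;
 (*25*) IJeq R 30 27; IJmp R 37; IJeq R 3 29; IJmp R 121; IConst 31 0;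
 (*30*) IConst 32 0; IConst 33 1; IConst 34 0; IConst 35 0; IConst 36 1;
 (*35*) IEmit R 2 31; IJmp R 121; ISub R 38 99 3; IMul R 39 38 1; IDiv R 40 39 30;
 (*40*) IMul R 44 38 4; IDiv R 41 44 30; ISub R 42 99 4; IAdd R 43 1 99; IEmit R 1 40;
 (*45*) IJmp R 121; IJmp R 121; IMul R 45 10 11; ISub R 46 23 45; IJeq R 46 66;
 (*50*) IJlt R 46 52; IJmp R 121; ISub R 48 99 46; IConst 49 2; IMul R 50 2 4;
 (*55*) IMul R 51 49 5; IMul R 52 51 1; ISub R 53 50 52; IDiv R 54 53 48; IMul R 56 49 0;
 (*60*) IMul R 57 56 4; ISub R 58 14 57; IDiv R 55 58 48; IEmit R 0 54; IJmp R 121;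
 (*65*) IJmp R 121; IJeq R 0 96; IAdd R 60 3 99; IAdd R 61 1 99; IAdd R 62 0 99;
 (*70*) IConst 70 2; IMul R 71 70 0; IDiv R 72 2 71; ISub R 73 99 72; IConst 74 1;
 (*75*) IRoots R 64 60 2; IJeq R 64 121; ISub R 75 64 74; IJeq R 75 90; IAdd R 80 65 99;
 (*80*) IAdd R 81 99 99; IAdd R 82 73 99; IAdd R 83 74 99; IEmit R 1 80; IAdd R 84 66 99;
 (*85*) IAdd R 85 99 99; IAdd R 86 73 99; IAdd R 87 74 99; IEmit R 1 84; IJmp R 121;
 (*90*) IAdd R 80 65 99; IAdd R 81 99 99; IAdd R 82 73 99; IAdd R 83 74 99; IEmit R 1 80;
 (*95*) IJmp R 121; IAdd R 100 3 99; IAdd R 101 4 99; IAdd R 102 5 99; IConst 103 1;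
 (*100*) IRoots R 104 100 2; IJeq R 104 121; ISub R 107 104 103; IJeq R 107 115; IAdd R 110 99 99;
 (*105*) IAdd R 111 105 99; IAdd R 112 103 99; IAdd R 113 99 99; IEmit R 1 110; IAdd R 114 99 99;
 (*110*) IAdd R 115 106 99; IAdd R 116 103 99; IAdd R 117 99 99; IEmit R 1 114; IJmp R 121;
 (*115*) IAdd R 110 99 99; IAdd R 111 105 99; IAdd R 112 103 99; IAdd R 113 99 99; IEmit R 1 110;
 (*120*) IJmp R 121].

Lemma size_Prog : size Prog = 121%N. Proof. by []. Qed.

Lemma ex_step (P : program R) (Q : mstate R -> Prop) s1 s2 : step P s1 s2 ->
  (exists s, reach P s2 s /\ Q s) -> exists s, reach P s1 s /\ Q s.
Proof. by move=> st [s [r q]]; exists s; split => //; apply: reach_step st r. Qed.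

Lemma ex_done (P : program R) (Q : mstate R -> Prop) s : Q s -> exists t, reach P s t /\ Q t.
Proof. by move=> q; exists s; split => //; apply: reach_refl. Qed.

Lemma poly_of_regs2 (reg : nat -> R) sr x :
  (poly_of_regs reg sr 2).[x] = reg sr + reg sr.+1 * x + reg sr.+2 * x ^+ 2.
Proof.
rewrite /poly_of_regs horner_poly !big_ord_recl big_ord0 /= addn0 expr0 mulr1 expr1.
by rewrite /bump /= addn1 addn2 addr0 addrA.
Qed.

Definition rreg (reg : nat -> R) (d : nat) (rs : seq R) : nat -> R :=
  fun i => if i == d then (size rs)%:R
     else if (d < i <= d + size rs)%N then nth 0 rs (i - d.+1) else reg i.

Lemma rreg0 reg d : rreg reg d [::] = upd reg d 0%:R.
Proof.
apply: funext => i; rewrite /rreg /upd /=.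
case: eqP => // ne; rewrite addn0; case: (d < i <= d)%N / boolP => //.
by move=> h; exfalso; lia.
Qed.

Lemma rreg1 reg d u1 : rreg reg d [:: u1] = upd (upd reg d 1%:R) d.+1 u1.
Proof.
apply: funext => i; rewrite /rreg /upd /=.
case: (eqVneq i d.+1) => [->|n1]; first by rewrite (gtn_eqF (ltnSn d)) ltnSn addn1 leqnn subnn.
case: eqP => // ne; case: (d < i <= d + 1)%N / boolP => //.
by move=> h; exfalso; lia.
Qed.

Lemma rreg2 reg d u1 u2 :
  rreg reg d [:: u1; u2] = upd (upd (upd reg d 2%:R) d.+1 u1) d.+2 u2.
Proof.
apply: funext => i; rewrite /rreg /upd /=.
case: (eqVneq i d.+2) => [->|n2].
  rewrite (gtn_eqF (leqW (ltnSn d))) ltnW ?ltnSn //= addn2 leqnn /=.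
  by rewrite subSS subSn // subnn.
case: (eqVneq i d.+1) => [->|n1]; first by rewrite (gtn_eqF (ltnSn d)) ltnSn addn2 /= leqW // subnn.
case: eqP => // ne; case: (d < i <= d + 2)%N / boolP => //.
by move=> h; exfalso; lia.
Qed.

Lemma ex_roots2 (P : program R) (Q : mstate R -> Prop) pc reg out d sr :
  nth (IJmp R pc) P pc = IRoots R d sr 2 -> (pc < size P)%N ->
  poly_of_regs reg sr 2 != 0 ->
  (forall rs, sorted <%R rs -> (forall x, (x \in rs) = root (poly_of_regs reg sr 2) x) ->
   match rs with
   | [::] => exists t, reach P (MState pc.+1 (upd reg d 0%:R) out) t /\ Q t
   | [:: u1] => exists t, reach P (MState pc.+1 (upd (upd reg d 1%:R) d.+1 u1) out) t /\ Q t
   | [:: u1; u2] => exists t,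
        reach P (MState pc.+1 (upd (upd (upd reg d 2%:R) d.+1 u1) d.+2 u2) out) t /\ Q t
   | _ => True end) ->
  exists t, reach P (MState pc reg out) t /\ Q t.
Proof.
move=> Hi Hl pn H.
set p := poly_of_regs reg sr 2 in pn H.
set rs := rootsR p.
have srt : sorted <%R rs by exact: sorted_roots.
have mem : forall x, (x \in rs) = root p x.
  move=> x; rewrite -(roots_on_rootsR pn x) /=.
  by [].
have sz : (size rs <= 2)%N.
  have uq : uniq rs := sorted_uniq lt_trans ltxx srt.
  have al : all (root p) rs by apply/allP => x; rewrite mem.
  have h := max_poly_roots pn al uq.
  have sp : (size p <= 3)%N by rewrite /p /poly_of_regs; exact: size_poly.
  by rewrite -ltnS; apply: leq_trans h sp.
have := H rs srt mem.
have Hr : roots_result reg (rreg reg d rs) d sr 2.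
  by rewrite /roots_result (negbTE pn); exists rs; split.
have st := StRoots out Hi Hl Hr.
case: rs srt mem sz Hr st => [|u1 [|u2 [|u3 l]]] srt mem sz Hr st //.
- by move=> h; apply: (ex_step _ h); rewrite -rreg0.
- by move=> h; apply: (ex_step _ h); rewrite -rreg1.
- by move=> h; apply: (ex_step _ h); rewrite -rreg2.
Qed.

End M2.

Section L.
Variable R : realType.
Implicit Types (a b c d e g : R).
Local Notation VV a b c d e g := [set z : R * R | Fq a b c d e g z = 0].

Lemma of_nil : output_family ([::] : seq (descr R)) = set0.
Proof. by apply/seteqP; split => C // [e]. Qed.

Lemma of_map (D : R -> descr R) (L : R -> set (R * R)) (S : R -> Prop) rs :
  (forall x, (x \in rs) <-> S x) -> (forall u, descr_set (D u) = L u) ->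
  output_family (map D rs) = [set C | exists u, S u /\ C = L u].
Proof.
move=> HS HD; apply/seteqP; split => C.
  by move=> [e /mapP [u urs ->] ->]; exists u; split; [apply/HS | apply: HD].
move=> [u [Su ->]]; exists (D u); last by rewrite HD.
by apply/mapP; exists u => //; apply/HS.
Qed.

Lemma descr0 (x y : R) : descr_set ((x, y), [::]) = [set (x, y)].
Proof.
apply/seteqP; split => z /=.
  by move=> [t [_ ->]]; rewrite !big_ord0 !addr0.
by move=> ->; exists [::]; rewrite !big_ord0 !addr0.
Qed.

Lemma descr1 (x y v1 v2 : R) : descr_set ((x, y), [:: (v1, v2)]) =
  [set z | exists t, z = (x + t * v1, y + t * v2)].
Proof.
apply/seteqP; split => z /=.
  by move=> [t [_ ->]]; exists t`_0; rewrite !big_ord1.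
by move=> [t ->]; exists [:: t]; rewrite !big_ord1.
Qed.

Lemma descr2 : descr_set (((0 : R), (0 : R)), [:: (1, 0); (0, 1)]) = setT.
Proof.
apply/seteqP; split => // z _; exists [:: z.1; z.2]; split => //=.
rewrite !big_ord_recr !big_ord0 /=; case: z => x y /=; congr pair; ring.
Qed.

Lemma lvl_line (al be u x y v1 v2 : R) : (al != 0) || (be != 0) ->
  al * x + be * y = u -> al * v1 + be * v2 = 0 -> v1 ^+ 2 + v2 ^+ 2 != 0 ->
  lvl al be u = [set z | exists t, z = (x + t * v1, y + t * v2)].
Proof.
move=> nz hb hv nv; apply/seteqP; split => z /=; last first.
  by move=> [t ->]; rewrite /lvl /= -hb -[RHS]addr0 -(mulr0 t) -hv; ring.
case: z => z1 z2; rewrite /lvl /= => hz.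
have hw : al * (z1 - x) + be * (z2 - y) = 0 by rewrite -(subrr u) -{1}hz -hb; ring.
have cr : (z1 - x) * v2 - (z2 - y) * v1 = 0.
  case/orP: nz => h.
    apply: (mulfI h); rewrite mulr0.
    by apply: (eq_from0 (k := v2) hw); apply: (eq_from0 (k := - (z2 - y)) hv) => //; ring.
  apply: (mulfI h); rewrite mulr0.
  by apply: (eq_from0 (k := - v1) hw); apply: (eq_from0 (k := z1 - x) hv) => //; ring.
exists (((z1 - x) * v1 + (z2 - y) * v2) / (v1 ^+ 2 + v2 ^+ 2)).
congr pair.
  apply/esym; apply: (eq_from0 (k := - v2 / (v1 ^+ 2 + v2 ^+ 2)) cr).
  by field.
apply/esym; apply: (eq_from0 (k := v1 / (v1 ^+ 2 + v2 ^+ 2)) cr).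
by field.
Qed.

Lemma sq0 (x : R) : x * x = 0 -> x = 0.
Proof. by move/eqP; rewrite mulf_eq0 orbb => /eqP. Qed.

Lemma sum3 (x y z : R) : x * x + y * y + z * z = 0 -> [/\ x = 0, y = 0 & z = 0].
Proof.
move=> h.
have h1 : 0 <= x * x by rewrite -expr2 sqr_ge0.
have h2 : 0 <= y * y by rewrite -expr2 sqr_ge0.
have h3 : 0 <= z * z by rewrite -expr2 sqr_ge0.
by split; apply: sq0; lra.
Qed.

Lemma leaf_nd a b c d e g :
  4 * (a * c * g) + b * d * e - a * (e * e) - c * (d * d) - b * b * g != 0 ->
  output_family [::] = Vaff (VV a b c d e g).
Proof.
move=> H; rewrite of_nil Vaff_nondeg //.
by rewrite (_ : detc a b c d e g = 4 * (a * c * g) + b * d * e - a * (e * e) - c * (d * d) - b * b * g) //;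
  rewrite /detc; ring.
Qed.

Lemma leaf_plane a b c d e g : a * a + b * b + c * c = 0 -> d * d + e * e = 0 -> g = 0 ->
  output_family [:: ((0 : R), (0 : R), [:: (1, 0); (0, 1)])] = Vaff (VV a b c d e g).
Proof.
move=> /sum3 [-> -> ->] hn ->.
have h0 : d * d + e * e + 0 * 0 = 0 by rewrite mulr0 addr0.
have [d0 e0 _] := sum3 h0.
rewrite d0 e0 (_ : VV 0 0 0 0 0 0 = setT); last first.
  by apply/seteqP; split => z // _; rewrite /Fq /=; ring.
rewrite Vaff_setT; apply/seteqP; split => C.
  by move=> [x]; rewrite inE => /eqP -> ->; rewrite descr2.
by move=> ->; exists (0, 0, [:: (1, 0); (0, 1)]); rewrite ?inE ?descr2.
Qed.

Lemma leaf_empty a b c d e g : a * a + b * b + c * c = 0 -> d * d + e * e = 0 -> g != 0 ->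
  output_family [::] = Vaff (VV a b c d e g).
Proof.
move=> /sum3 [-> -> ->] hn hg.
have h0 : d * d + e * e + 0 * 0 = 0 by rewrite mulr0 addr0.
have [d0 e0 _] := sum3 h0.
rewrite d0 e0 of_nil (_ : VV 0 0 0 0 0 g = set0); first by rewrite Vaff_set0.
apply/seteqP; split => z //=; rewrite /Fq !mul0r !add0r => h.
by move: hg; rewrite h eqxx.
Qed.

Lemma of_one (x : descr R) : output_family [:: x] = [set descr_set x].
Proof.
apply/seteqP; split => C; first by move=> [e]; rewrite inE => /eqP -> ->.
by move=> ->; exists x; rewrite ?inE.
Qed.

Lemma leaf_line a b c d e g : a * a + b * b + c * c = 0 -> d * d + e * e != 0 ->
  output_family [:: ((0 - g) * d / (d * d + e * e), (0 - g) * e / (d * d + e * e),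
         [:: (0 - e, d + 0)])] = Vaff (VV a b c d e g).
Proof.
move=> /sum3 [-> -> ->] hn.
have nz : (d != 0) || (e != 0).
  by apply: contraNT hn; rewrite negb_or !negbK => /andP [/eqP -> /eqP ->]; rewrite mulr0 addr0.
rewrite Vaff_lin // of_one descr1.
rewrite -(@lvl_line d e (- g) ((0 - g) * d / (d * d + e * e)) ((0 - g) * e / (d * d + e * e)) (0 - e) (d + 0) nz) //.
- by field.
- by ring.
- rewrite (_ : (0 - e) ^+ 2 + (d + 0) ^+ 2 = d * d + e * e) //; ring.
Qed.

Lemma leaf_pt a b c d e g :
  4 * (a * c * g) + b * d * e - a * (e * e) - c * (d * d) - b * b * g = 0 ->
  b * b - 4 * (a * c) < 0 ->
  output_family [:: ((b * e - 2 * c * d) / (0 - (b * b - 4 * (a * c))),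
         (b * d - 2 * a * e) / (0 - (b * b - 4 * (a * c))), [::])] = Vaff (VV a b c d e g).
Proof.
move=> Hd Hs.
rewrite Vaff_ell; first last.
- by apply: (eq_from0 (k := 1) Hd); rewrite /detc; ring.
- by rewrite (_ : b ^+ 2 - 4 * a * c = b * b - 4 * (a * c)) //; ring.
rewrite of_one descr0 /zc.
rewrite (_ : 0 - (b * b - 4 * (a * c)) = 4 * a * c - b ^+ 2) //; ring.
Qed.

Lemma leaf_hyp a b c d e g :
  4 * (a * c * g) + b * d * e - a * (e * e) - c * (d * d) - b * b * g = 0 ->
  b * b - 4 * (a * c) != 0 -> 0 <= b * b - 4 * (a * c) ->
  output_family [::] = Vaff (VV a b c d e g).
Proof.
move=> Hd Hn Hs.
rewrite of_nil Vaff_hyp //.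
  by rewrite (_ : b ^+ 2 - 4 * a * c = b * b - 4 * (a * c)); [rewrite lt0r Hn | ring].
by apply: (eq_from0 (k := 1) Hd); rewrite /detc; ring.
Qed.

Lemma leaf_a0 a b c d e g (rs : seq R) :
  4 * (a * c * g) + b * d * e - a * (e * e) - c * (d * d) - b * b * g = 0 ->
  a * a + b * b + c * c != 0 -> b * b - 4 * (a * c) = 0 -> a = 0 ->
  (forall x, (x \in rs) = (c * x ^+ 2 + e * x + g == 0)) ->
  output_family (map (fun u => (0 + 0, u + 0, [:: (1 + 0, 0 + 0)])) rs) = Vaff (VV a b c d e g).
Proof.
move=> Hd Hq HD Ha Hm; subst a.
have b0 : b = 0 by apply: sq0; apply: (eq_from0 (k := 1) HD); ring.
subst b.
have cn : c != 0 by apply: contraNneq Hq => ->; rewrite !mulr0 !addr0.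
rewrite Vaff_para0 //; first last.
- by apply: (eq_from0 (k := 1) Hd); rewrite /detc; ring.
- by ring.
apply: of_map => [x|u].
  by rewrite Hm; split => [/eqP|->].
rewrite descr1 (lvl_line (x := 0 + 0) (y := u + 0) (v1 := 1 + 0) (v2 := 0 + 0)).
- by [].
- by rewrite oner_neq0 orbT.
- by ring.
- by ring.
- by rewrite (_ : (1 + 0) ^+ 2 + (0 + 0) ^+ 2 = 1 :> R) ?oner_neq0 //; ring.
Qed.

Lemma leaf_a a b c d e g (rs : seq R) :
  4 * (a * c * g) + b * d * e - a * (e * e) - c * (d * d) - b * b * g = 0 ->
  b * b - 4 * (a * c) = 0 -> a != 0 ->
  (forall x, (x \in rs) = (a * x ^+ 2 + d * x + g == 0)) ->
  output_family (map (fun u => (u + 0, 0 + 0, [:: (0 - b / (2 * a) + 0, 1 + 0)])) rs) =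
  Vaff (VV a b c d e g).
Proof.
move=> Hd HD Ha Hm.
rewrite Vaff_para //; first last.
- by apply: (eq_from0 (k := 1) Hd); rewrite /detc; ring.
- by apply: (eq_from0 (k := 1) HD); ring.
apply: of_map => [x|u].
  by rewrite Hm; split => [/eqP|->].
rewrite descr1 (lvl_line (x := u + 0) (y := 0 + 0) (v1 := 0 - b / (2 * a) + 0) (v2 := 1 + 0)).
- by [].
- by rewrite oner_neq0.
- by ring.
- by ring.
- apply/lt0r_neq0; rewrite (_ : (1 + 0) = 1 :> R) ?addr0 // expr1n.
  by apply: ltr_wpDl; [exact: sqr_ge0 | exact: ltr01].
Qed.

End L.

Section M3.
Variable R : realType.
Implicit Types (P : program R) (Q : mstate R -> Prop).

Definition EX P Q s := exists t, reach P s t /\ Q t.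

Lemma ex_const P Q pc reg out d c : nth (IJmp R pc) P pc = IConst d c -> (pc < size P)%N ->
  EX P Q (MState pc.+1 (upd reg d c) out) -> EX P Q (MState pc reg out).
Proof. by move=> Hi Hl; apply: ex_step; apply: StConst. Qed.

Lemma ex_add P Q pc reg out d x y v : nth (IJmp R pc) P pc = IAdd R d x y -> (pc < size P)%N ->
  reg x + reg y = v ->
  EX P Q (MState pc.+1 (upd reg d v) out) -> EX P Q (MState pc reg out).
Proof. by move=> Hi Hl <-; apply: ex_step; apply: StAdd. Qed.

Lemma ex_sub P Q pc reg out d x y v : nth (IJmp R pc) P pc = ISub R d x y -> (pc < size P)%N ->
  reg x - reg y = v ->
  EX P Q (MState pc.+1 (upd reg d v) out) -> EX P Q (MState pc reg out).
Proof. by move=> Hi Hl <-; apply: ex_step; apply: StSub. Qed.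

Lemma ex_mul P Q pc reg out d x y v : nth (IJmp R pc) P pc = IMul R d x y -> (pc < size P)%N ->
  reg x * reg y = v ->
  EX P Q (MState pc.+1 (upd reg d v) out) -> EX P Q (MState pc reg out).
Proof. by move=> Hi Hl <-; apply: ex_step; apply: StMul. Qed.

Lemma ex_div P Q pc reg out d x y v : nth (IJmp R pc) P pc = IDiv R d x y -> (pc < size P)%N ->
  reg x / reg y = v ->
  EX P Q (MState pc.+1 (upd reg d v) out) -> EX P Q (MState pc reg out).
Proof. by move=> Hi Hl <-; apply: ex_step; apply: StDiv. Qed.

Lemma ex_jmp P Q pc reg out l : nth (IJmp R pc) P pc = IJmp R l -> (pc < size P)%N ->
  EX P Q (MState l reg out) -> EX P Q (MState pc reg out).
Proof. by move=> Hi Hl; apply: ex_step; apply: StJmp. Qed.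

Lemma ex_jeq P Q pc reg out x l v : nth (IJmp R pc) P pc = IJeq R x l -> (pc < size P)%N ->
  reg x = v ->
  (v = 0 -> EX P Q (MState l reg out)) -> (v != 0 -> EX P Q (MState pc.+1 reg out)) ->
  EX P Q (MState pc reg out).
Proof.
move=> Hi Hl Hv H1 H2; apply: (ex_step (StJeq reg out Hi Hl)).
by rewrite Hv; case: (eqVneq v 0) => h; [apply: H1 | apply: H2].
Qed.

Lemma ex_jlt P Q pc reg out x l v : nth (IJmp R pc) P pc = IJlt R x l -> (pc < size P)%N ->
  reg x = v ->
  (v < 0 -> EX P Q (MState l reg out)) -> (0 <= v -> EX P Q (MState pc.+1 reg out)) ->
  EX P Q (MState pc reg out).
Proof.
move=> Hi Hl Hv H1 H2; apply: (ex_step (StJlt reg out Hi Hl)).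
by rewrite Hv; case: (ltP v 0) => h; [apply: H1 | apply: H2].
Qed.

Lemma ex_emit P Q pc reg out k r e : nth (IJmp R pc) P pc = IEmit R k r -> (pc < size P)%N ->
  emit_descr reg k r = e ->
  EX P Q (MState pc.+1 reg (rcons out e)) -> EX P Q (MState pc reg out).
Proof. by move=> Hi Hl <-; apply: ex_step; apply: StEmit. Qed.

Lemma por2_nz (reg : nat -> R) sr : reg sr.+2 != 0 -> poly_of_regs reg sr 2 != 0.
Proof.
move=> h; apply/eqP => p0; move: h.
have : (poly_of_regs reg sr 2)`_2 = reg (sr + 2)%N by rewrite /poly_of_regs coef_poly.
by rewrite p0 coef0 addn2 => <-; rewrite eqxx.
Qed.

Lemma nz_c (a b c : R) : a * a + b * b + c * c != 0 -> b * b - 4 * (a * c) = 0 -> a = 0 ->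
  c + 0 != 0.
Proof.
move=> Hq HD Ha; subst a; rewrite addr0.
have b0 : b = 0 by apply: sq0; apply: (eq_from0 (k := 1) HD); ring.
by apply: contraNneq Hq => ->; rewrite b0 !mulr0 !addr0.
Qed.

Ltac ck H := exfalso; move: H; rewrite ?subrr ?eqxx ?oner_eq0 ?pnatr_eq0 //; try (move=> ?; lra).

Ltac vs := rewrite /upd /=; reflexivity.
Ltac stp := first [
    (eapply ex_const; [reflexivity|reflexivity|])
  | (eapply ex_add; [reflexivity|reflexivity|vs|])
  | (eapply ex_sub; [reflexivity|reflexivity|vs|])
  | (eapply ex_mul; [reflexivity|reflexivity|vs|])
  | (eapply ex_div; [reflexivity|reflexivity|vs|])
  | (eapply ex_jmp; [reflexivity|reflexivity|])
  | (eapply ex_emit; [reflexivity|reflexivity|rewrite /emit_descr /upd /=; reflexivity|]) ].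
Ltac jeq H := eapply ex_jeq; [reflexivity|reflexivity|vs| move=> H | move=> H].
Ltac jlt H := eapply ex_jlt; [reflexivity|reflexivity|vs| move=> H | move=> H].

Lemma run (a b c d e g : R) :
  EX (Prog R) (fun t => halted (Prog R) t /\
   output_family (ms_out t) = Vaff [set z | Fq a b c d e g z = 0])
  (MState 0 (fun i => nth 0 [:: a; d; b; g; e; c] i) [::]).
Proof.
do 16 stp.
jeq Hdet; last first.
  stp. apply: ex_done; split => //=.
  exact: leaf_nd.
do 4 stp. jeq Hq.
  stp. jeq Hn.
    jeq Hg.
      do 8 stp. apply: ex_done; split => //=.
      exact: leaf_plane.
    stp. apply: ex_done; split => //=.
    exact: leaf_empty.
  do 10 stp. apply: ex_done; split => //=.
  exact: leaf_line.
do 3 stp. jeq HD; last first.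
  jlt Hs.
    do 13 stp. apply: ex_done; split => //=.
    exact: leaf_pt.
  stp. apply: ex_done; split => //=.
  exact: leaf_hyp.
jeq Ha.
  do 4 stp.
  eapply ex_roots2; [reflexivity | reflexivity | apply: por2_nz; rewrite /upd /= | move=> rs Hs Hm].
    exact: nz_c Hq HD Ha.
  have Hm' : forall x, (x \in rs) = (c * x ^+ 2 + e * x + g == 0).
    by move=> x; rewrite Hm /root poly_of_regs2 /upd /=; congr (_ == _); ring.
  case: rs Hs Hm Hm' => [|u1 [|u2 [|u3 l]]] Hs Hm Hm' //.
  - jeq Hk.
      apply: ex_done; split => //=.
      exact: (leaf_a0 (rs := [::]) Hdet Hq HD Ha Hm').
    ck Hk.
  - jeq Hk; first by ck Hk.
    stp. jeq Hk1.
      do 6 stp. apply: ex_done; split => //=.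
      exact: (leaf_a0 (rs := [:: u1]) Hdet Hq HD Ha Hm').
    ck Hk1.
  - jeq Hk; first by ck Hk.
    stp. jeq Hk1; first by ck Hk1.
    do 11 stp. apply: ex_done; split => //=.
    exact: (leaf_a0 (rs := [:: u1; u2]) Hdet Hq HD Ha Hm').
do 8 stp.
eapply ex_roots2; [reflexivity | reflexivity | apply: por2_nz; rewrite /upd /= | move=> rs Hs Hm].
  by rewrite addr0.
have Hm' : forall x, (x \in rs) = (a * x ^+ 2 + d * x + g == 0).
  by move=> x; rewrite Hm /root poly_of_regs2 /upd /=; congr (_ == _); ring.
case: rs Hs Hm Hm' => [|u1 [|u2 [|u3 l]]] Hs Hm Hm' //.
- jeq Hk.
    apply: ex_done; split => //=.
    exact: (leaf_a (rs := [::]) Hdet HD Ha Hm').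
  ck Hk.
- jeq Hk; first by ck Hk.
  stp. jeq Hk1.
    do 6 stp. apply: ex_done; split => //=.
    exact: (leaf_a (rs := [:: u1]) Hdet HD Ha Hm').
  ck Hk1.
- jeq Hk; first by ck Hk.
  stp. jeq Hk1; first by ck Hk1.
  do 11 stp. apply: ex_done; split => //=.
  exact: (leaf_a (rs := [:: u1; u2]) Hdet HD Ha Hm').
Qed.

End M3.

Section Fin.
Variable R : realType.

Lemma zeroset_Fq (f0 f1 f2 : {poly R}) :
  (size f0 <= 1)%N -> (size f1 <= 2)%N -> (size f2 <= 3)%N ->
  zeroset f0 f1 f2 = [set z | Fq (f0`_0) (f1`_1) (f2`_2) (f1`_0) (f2`_1) (f2`_0) z = 0].
Proof.
move=> s0 s1 s2.
have E : forall z, feval f0 f1 f2 z = Fq (f0`_0) (f1`_1) (f2`_2) (f1`_0) (f2`_1) (f2`_0) z.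
  move=> z; rewrite /feval (horner_coef_wide _ s0) (horner_coef_wide _ s1).
  rewrite (horner_coef_wide _ s2) !big_ord_recr !big_ord0 /= /Fq; ring.
by apply/seteqP; split => z /=; rewrite /zeroset /= E.
Qed.

End Fin.

Theorem lemma4p9 (R : realType) : exists P : program R, computes_Vaff P.
Proof.
exists (Prog R) => f0 f1 f2 s0 s1 s2.
have [t [rt [ht ot]]] := run (f0`_0) (f1`_1) (f2`_2) (f1`_0) (f2`_1) (f2`_0).
split; first by exists t.
move=> s rs hs.
by rewrite (reach_uniq rs hs rt ht) ot zeroset_Fq.
Qed.
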